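(* Let $\mathscr{M}_4(5)$ be the regular map on Bring's surface $\overline{\mathbb{H}/H_4(5)}$ whose vertices are labelled by Hecke--Farey coordinates modulo $5$. The map $z\mapsto z+\sqrt2$, applied to Hecke--Farey coordinates, induces a rotation of $\mathscr{M}_4(5)$ through angle $2\pi/5$ about the centre vertex $\frac{1}{0\sqrt2}$.
   Context: $H_4$ is the Hecke group generated by $T(z)=z+\sqrt2$ and $S(z)=-1/z$ on the upper half-plane $\mathbb{H}$. The universal 4-gonal map $\hat{\mathscr{M}}_4$ is the map on $\mathbb{H}$ whose vertices are the images of $\infty$ under $H_4$ (the real numbers $\frac{a}{c\sqrt2}$ and $\frac{b\sqrt2}{d}$ with $a,b,c,d\in\mathbb{Z}$, $\gcd(a,c)=\gcd(b,d)=1$, including $\infty$) and whose edges are the images of the imaginary axis under $H_4$; $\frac{a}{c\sqrt2}$ and $\frac{b\sqrt2}{d}$ are joined by an edge iff $ad-2bc=\pm1$. $H_4(5)$ is the principal congruence subgroup of level 5: transformations $z\mapsto\frac{az+b\sqrt2}{c\sqrt2 z+d}$ with $a,b,c,d\in\mathbb{Z}$, $ad-2bc=1$, $a\equiv d\equiv\pm1\pmod5$, $b\equiv c\equiv0\pmod5$. $\mathscr{M}_4(5)=\hat{\mathscr{M}}_4/H_4(5)$ is a regular map of type $\{5,4\}$ (quadrilateral faces, vertices of valency 5) with 30 vertices, 60 edges and 24 faces on the genus-4 surface $\overline{\mathbb{H}/H_4(5)}$ (Bring's surface). Its vertices are labelled by Hecke--Farey coordinates modulo 5: expressions $\frac{a}{c\sqrt2}$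 or $\frac{b\sqrt2}{d}$ with $a,b,c,d\in\mathbb{Z}_5$, where $\frac{a}{c\sqrt2}$ is identified with $\frac{-a}{-c\sqrt2}$ (and similarly for the other type); two such vertices $\frac{a}{c\sqrt2}$, $\frac{b\sqrt2}{d}$ are adjacent iff $ad-2bc\equiv\pm1\pmod5$. The vertex $\frac{1}{0\sqrt2}$ (image of $\infty$) is called the centre. *)

(* Defs.v *)
From HB Require Import structures.
From mathcomp Require Import all_boot all_order all_algebra.
Set Implicit Arguments. Unset Strict Implicit. Unset Printing Implicit Defensive.
Import GRing.Theory.
Local Open Scope ring_scope.

Notation Z5 := 'Z_5.

(* A raw Hecke--Farey label modulo 5:
   (false, (a, c))  stands for  a / (c sqrt2)
   (true,  (b, d))  stands for  b sqrt2 / d                                 *)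
Definition label := (bool * (Z5 * Z5))%type.

(* Canonical choice of sign: the label (x, y) is identified with (-x, -y).
   Among {1,2,3,4} = Z5^*, the "positive" half is {1,2}; a pair is
   canonical when its first nonzero entry is positive. *)
Definition posZ5 (x : Z5) : bool := (x == 1) || (x == 2).
Definition canon (p : Z5 * Z5) : bool :=
  if p.1 != 0 then posZ5 p.1 else posZ5 p.2.
Definition normp (p : Z5 * Z5) : Z5 * Z5 :=
  if canon p then p else (- p.1, - p.2).

(* Vertices of M_4(5): nonzero labels taken up to the sign identification,
   represented by their canonical representative. *)
Definition is_vertex (x : label) : bool := (x.2 != (0, 0)) && canon x.2.
Definition vertex := {x : label | is_vertex x}.

Lemma is_vertex_centre : is_vertex (false, (1, 0)).
Proof. by []. Qed.

(* the centre  1/(0 sqrt2)  (image of infinity) *)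
Definition centre : vertex := exist _ (false, (1, 0)) is_vertex_centre.

(* The vertex with Hecke--Farey coordinate given by a raw label
   (t, p) with p <> (0,0).  (For the meaningless label p = (0,0) this
   returns the centre; it is never used that way.) *)
Definition vtx (t : bool) (p : Z5 * Z5) : vertex :=
  insubd centre (t, normp p).

Definition vA (a c : Z5) : vertex := vtx false (a, c).
Definition vB (b d : Z5) : vertex := vtx true (b, d).

Definition adjAB (a c b d : Z5) : bool :=
  (a * d - 2 * b * c == 1) || (a * d - 2 * b * c == -1).
Definition adj (u v : vertex) : bool :=
  match val u, val v with
  | (false, (a, c)), (true, (b, d)) => adjAB a c b d
  | (true, (b, d)), (false, (a, c)) => adjAB a c b d
  | _, _ => false
  end.

(* The generators of H_4 acting on Hecke--Farey coordinates:
   T(z) = z + sqrt2 :  a/(c sqrt2) |-> (a+2c)/(c sqrt2),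
                       b sqrt2/d   |-> (b+d) sqrt2/d;
   S(z) = -1/z      :  a/(c sqrt2) |-> (-c) sqrt2/a,
                       b sqrt2/d   |-> (-d)/(b sqrt2).                       *)
Definition Tlab (x : label) : label :=
  match x with
  | (false, (a, c)) => (false, (a + 2 * c, c))
  | (true, (b, d)) => (true, (b + d, d))
  end.
Definition Slab (x : label) : label :=
  match x with
  | (false, (a, c)) => (true, (- c, a))
  | (true, (b, d)) => (false, (- d, b))
  end.

Definition Tv (v : vertex) : vertex := let: (t, p) := Tlab (val v) in vtx t p.
Definition Sv (v : vertex) : vertex := let: (t, p) := Slab (val v) in vtx t p.

(* In the universal map the faces are the H_4-images of the
   quadrilateral with vertices  infinity, 0, -1/sqrt2, -sqrt2
   (the orbit of infinity under z |-> -1/(z+sqrt2)).  The faces of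
   M_4(5) are their projections; H_4 is generated by T and S, and the
   quotient acts through the finite group generated by Tv, Sv. *)
Definition base_face : {set vertex} :=
  [set centre; vB 0 1; vA (-1) 1; vB (-1) 1].

Inductive is_face : {set vertex} -> Prop :=
  | face_base : is_face base_face
  | face_T F : is_face F -> is_face (Tv @: F)
  | face_S F : is_face F -> is_face (Sv @: F).

(* Main.v *)
Require Import Defs.
From mathcomp Require Import all_boot all_order all_algebra.
From HB Require Import structures.
Import GRing.Theory.
Local Open Scope ring_scope.

Lemma Z5_cases (P : Z5 -> Prop) : P 0 -> P 1 -> P 2 -> P 3 -> P 4 -> forall x, P x.
Proof.
move=> H0 H1 H2 H3 H4 [[|[|[|[|[|n]]]]] Hn] //.
- by rewrite (_ : Ordinal _ = 0) //; apply: val_inj.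
- by rewrite (_ : Ordinal _ = 1) //; apply: val_inj.
- by rewrite (_ : Ordinal _ = 2) //; apply: val_inj.
- by rewrite (_ : Ordinal _ = 3) //; apply: val_inj.
- by rewrite (_ : Ordinal _ = 4) //; apply: val_inj.
Qed.

Lemma V_cases (P : vertex -> Prop) :
  (forall t a c (H : is_vertex (t, (a, c))), P (exist _ (t, (a, c)) H)) -> forall v, P v.
Proof. by move=> H [[t [a c]] Hv]; apply: H. Qed.

Ltac vcase := apply: V_cases; case; elim/Z5_cases; elim/Z5_cases;
  try (let H := fresh "H" in intro H; exfalso; revert H; vm_compute; discriminate); intro.

Definition vl (t : bool) (p : Z5 * Z5) : label :=
  if is_vertex (t, normp p) then (t, normp p) else val centre.
Lemma val_vtx t p : val (vtx t p) = vl t p.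
Proof. by rewrite /vtx /vl val_insubd. Qed.
Definition Tl (x : label) : label := let: (t, p) := Tlab x in vl t p.
Lemma val_Tv v : val (Tv v) = Tl (val v).
Proof. by rewrite /Tv /Tl; case: (Tlab _) => t p; rewrite val_vtx. Qed.
Lemma val_iterTv n v : val (iter n Tv v) = iter n Tl (val v).
Proof. by elim: n => //= n <-; rewrite val_Tv. Qed.

Lemma iter5 : forall v : vertex, iter 5 Tv v = v.
Proof. vcase; apply: val_inj; rewrite val_iterTv; apply/eqP; vm_compute; reflexivity. Qed.

Lemma adjT : forall u v : vertex, adj (Tv u) (Tv v) = adj u v.
Proof.
move=> u v; rewrite /adj !val_Tv; move: u v.
by vcase; vcase; vm_compute.
Qed.

Lemma memB (v : vertex) : (v \in [set vB b 1 | b : Z5]) =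
  [|| val v == vl true (0,1), val v == vl true (1,1), val v == vl true (2,1),
      val v == vl true (3,1) | val v == vl true (4,1)].
Proof.
apply/imsetP/idP => [[b _ ->]|].
  by move: b; apply: Z5_cases; rewrite /vB val_vtx eqxx ?orbT.
by case/orP => [|/orP[|/orP[|/orP[]]]] /eqP E; [exists 0|exists 1|exists 2|exists 3|exists 4] => //;
  apply: val_inj; rewrite E /vB val_vtx.
Qed.

Lemma nbrs : [set v | adj centre v] = [set vB b 1 | b : Z5].
Proof.
apply/setP => v; rewrite inE memB; move: v.
by vcase; vm_compute.
Qed.

Lemma Tshift : forall b : Z5, Tv (vB b 1) = vB (b + 1) 1.
Proof.
by apply: Z5_cases; apply: val_inj; rewrite val_Tv /vB !val_vtx; apply/eqP; vm_compute.
Qed.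

Lemma Tcentre : Tv centre = centre.
Proof. by apply: val_inj; rewrite val_Tv; apply/eqP; vm_compute. Qed.

Theorem lemma1 :
  [/\ bijective Tv,
      (forall u v : vertex, adj (Tv u) (Tv v) = adj u v)
    & (forall F : {set vertex}, is_face (Tv @: F) <-> is_face F)] /\
  [/\ Tv centre = centre,
      [set v | adj centre v] = [set vB b 1 | b : Z5],
      (forall b : Z5, Tv (vB b 1) = vB (b + 1) 1)
    & (forall v : vertex, iter 5 Tv v = v)].
Proof.
have bij : bijective Tv.
  exists (iter 4 Tv) => v; first by rewrite -iterSr iter5.
  by rewrite -iterS iter5.
split; split => //.
- exact: adjT.
- move=> F; split; last exact: face_T.
  move=> H.
  have E : F = Tv @: (Tv @: (Tv @: (Tv @: (Tv @: F)))).
    rewrite -!imset_comp.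
    rewrite (eq_imset _ (_ : Tv \o (Tv \o (Tv \o (Tv \o Tv))) =1 id)); last first.
      by move=> x; exact: iter5.
    by rewrite imset_id.
  rewrite E; do 4 apply: face_T; exact: H.
- exact: Tcentre.
- exact: nbrs.
- exact: Tshift.
- exact: iter5.
Qed.
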